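(* Let $f$ be a periodic traveling wave (librational or rotational, of speed $c$ with $c^2\ne 1$). Then $\sigma(\mathrm{P})=\sigma(\mathrm{P})^*=-\sigma(\mathrm{P})=-\sigma(\mathrm{P})^*$, where $S^*=\{\bar\lambda:\lambda\in S\}$ and $-S=\{-\lambda:\lambda\in S\}$.
   Context: A traveling wave of speed $c$ ($c^2\neq1$) of $u_{tt}-u_{xx}+\sin u=0$ is a real solution $f$ of $(c^2-1)f''+\sin f=0$, with energy $E$ defined by $\tfrac12(c^2-1)(f')^2+1-\cos f=E$. Periodic traveling waves are the librational ones ($0<E<2$) and rotational ones ($E<0$ if $c^2<1$, $E>2$ if $c^2>1$). Set $\gamma=1/(c^2-1)$. $\sigma(\mathrm{P})$ is the set of $\lambda\in\mathbb{C}$ for which $p''-2c\gamma\lambda p'+\gamma(\lambda^2+\cos f(z))p=0$ has a nontrivial solution bounded on $\mathbb{R}$. *)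

(* Defs.v *)
From Stdlib Require Import Reals.
From Coquelicot Require Import Coquelicot.
Open Scope R_scope.

Definition traveling_wave (c : R) (f : R -> R) : Prop :=
  c ^ 2 <> 1 /\
  exists f' f'' : R -> R, forall z : R,
    is_derive f z (f' z) /\ is_derive f' z (f'' z) /\
    (c ^ 2 - 1) * f'' z + sin (f z) = 0.

Definition energy (c : R) (f : R -> R) (z : R) : R :=
  / 2 * (c ^ 2 - 1) * (Derive f z) ^ 2 + 1 - cos (f z).

Definition librational_wave (c : R) (f : R -> R) : Prop :=
  traveling_wave c f /\
  exists E : R, (forall z, energy c f z = E) /\ 0 < E < 2.

Definition rotational_wave (c : R) (f : R -> R) : Prop :=
  traveling_wave c f /\
  exists E : R, (forall z, energy c f z = E) /\
    ((c ^ 2 < 1 /\ E < 0) \/ (c ^ 2 > 1 /\ E > 2)).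

Definition periodic_traveling_wave (c : R) (f : R -> R) : Prop :=
  librational_wave c f \/ rotational_wave c f.

Definition gam (c : R) : R := / (c ^ 2 - 1).

Definition sigmaP (c : R) (f : R -> R) : C -> Prop := fun lam =>
  exists p p' p'' : R -> C,
    (forall z : R, is_derive p z (p' z) /\ is_derive p' z (p'' z) /\
      (p'' z - RtoC (2 * c * gam c) * lam * p' z
        + RtoC (gam c) * (lam * lam + RtoC (cos (f z))) * p z)%C = 0%C) /\
    (exists M : R, forall z : R, Cmod (p z) <= M) /\
    (exists z : R, p z <> 0%C).

Definition conj_set (S : C -> Prop) : C -> Prop :=
  fun mu => exists lam, S lam /\ mu = Cconj lam.
Definition neg_set (S : C -> Prop) : C -> Prop :=
  fun mu => exists lam, S lam /\ mu = Copp lam.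
Definition same_set (S T : C -> Prop) : Prop := forall mu, S mu <-> T mu.

(* Main.v *)
Require Import Defs.
From Stdlib Require Import Reals Lra Psatz Classical.
From Coquelicot Require Import Coquelicot.
Open Scope R_scope.

Lemma der_cont (h : R -> R) t d : is_derive h t d -> continuity_pt h t.
Proof.
  intro H. apply continuity_pt_filterlim. apply (ex_derive_continuous (V:=R_NormedModule) h). exists d; exact H.
Qed.

Lemma mvt_lb (h : R -> R) x y m : x <= y ->
  (forall t, x <= t <= y -> exists d, is_derive h t d /\ m <= d) ->
  m * (y - x) <= h y - h x.
Proof.
  intros Hxy H.
  destruct (MVT_gen h x y (Derive h)) as [c [Hc Hm]].
  - intros t Ht. rewrite Rmin_left in Ht by lra. rewrite Rmax_right in Ht by lra.
    destruct (H t ltac:(lra)) as [d [Hd _]]. rewrite (is_derive_unique _ _ _ Hd). exact Hd.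
  - intros t Ht. rewrite Rmin_left in Ht by lra. rewrite Rmax_right in Ht by lra.
    destruct (H t ltac:(lra)) as [d [Hd _]]. exact (der_cont _ _ _ Hd).
  - rewrite Rmin_left in Hc by lra. rewrite Rmax_right in Hc by lra.
    destruct (H c Hc) as [d [Hd Hmd]]. rewrite (is_derive_unique _ _ _ Hd) in Hm.
    rewrite Hm. nra.
Qed.

Lemma mvt_ub (h : R -> R) x y m : x <= y ->
  (forall t, x <= t <= y -> exists d, is_derive h t d /\ d <= m) ->
  h y - h x <= m * (y - x).
Proof.
  intros Hxy H.
  assert (-m * (y - x) <= (fun t => - h t) y - (fun t => - h t) x).
  { apply (mvt_lb (fun t => - h t)); auto. intros t Ht. destruct (H t Ht) as [d [Hd Hdm]].
    exists (-d). split; [|lra]. apply (is_derive_opp h t d) in Hd. exact Hd. }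
  simpl in H0. lra.
Qed.

Lemma ivt_hit (g : R -> R) x y v : (forall t, continuity_pt g t) ->
  g x <= v -> v <= g y -> exists t, g t = v.
Proof.
  intros Hc H1 H2.
  destruct (Req_dec (g x) v) as [E|E]; [now exists x|].
  destruct (Req_dec (g y) v) as [E'|E']; [now exists y|].
  destruct (Rtotal_order x y) as [Hl|[He|Hg]].
  - destruct (IVT (fun t => g t - v) x y) as [t [_ Ht]]; auto; try lra.
    + intro t. apply continuity_pt_minus; auto. apply continuity_pt_const. intros a b; auto.
    + exists t; lra.
  - subst; lra.
  - destruct (IVT (fun t => v - g t) y x) as [t [_ Ht]]; auto; try lra.
    + intro t. apply continuity_pt_minus; auto. apply continuity_pt_const. intros a b; auto.
    + exists t; lra.
Qed.

Lemma const_sign (g : R -> R) : (forall t, continuity_pt g t) -> (forall t, g t <> 0) ->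
  (forall t, 0 < g t) \/ (forall t, g t < 0).
Proof.
  intros Hc Hn.
  destruct (Rlt_or_le 0 (g 0)) as [Hp|Hp].
  - left. intro t. destruct (Rlt_or_le 0 (g t)) as [|H]; auto.
    destruct (ivt_hit g t 0 0 Hc H ltac:(lra)) as [s Hs]. now destruct (Hn s).
  - right. intro t. destruct (Rlt_or_le (g t) 0) as [|H]; auto.
    destruct (ivt_hit g 0 t 0 Hc Hp H) as [s Hs]. now destruct (Hn s).
Qed.

Lemma sin_lip a b : Rabs (sin a - sin b) <= Rabs (a - b).
Proof.
  destruct (Rle_or_lt b a) as [H|H].
  - destruct (MVT_gen sin b a cos) as [c [_ Hm]].
    + intros; apply is_derive_sin.
    + intros; apply continuity_sin.
    + rewrite Hm, Rabs_mult. pose proof (COS_bound c). 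
      assert (Rabs (cos c) <= 1) by (apply Rabs_le; lra).
      rewrite (Rabs_minus_sym a b). pose proof (Rabs_pos (b - a)). nra.
  - destruct (MVT_gen sin a b cos) as [c [_ Hm]].
    + intros; apply is_derive_sin.
    + intros; apply continuity_sin.
    + rewrite (Rabs_minus_sym (sin a)), Hm, Rabs_mult. pose proof (COS_bound c). 
      assert (Rabs (cos c) <= 1) by (apply Rabs_le; lra).
      rewrite (Rabs_minus_sym a b). pose proof (Rabs_pos (b - a)). nra.
Qed.

Lemma deq (f : R -> R) x d d' : is_derive f x d -> d = d' -> is_derive f x d'.
Proof. intros H E; subst; exact H. Qed.

Lemma ode_uniq K (a a' a'' b b' b'' : R -> R) :
  (forall z, is_derive a z (a' z) /\ is_derive a' z (a'' z) /\ a'' z = K * sin (a z)) ->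
  (forall z, is_derive b z (b' z) /\ is_derive b' z (b'' z) /\ b'' z = K * sin (b z)) ->
  a 0 = b 0 -> a' 0 = b' 0 -> forall z, a z = b z.
Proof.
  intros Ha Hb H0 H0' z.
  set (W := fun z => (a z - b z)^2 + (a' z - b' z)^2).
  set (Wd := fun z => 2 * (a z - b z) * (a' z - b' z) + 2 * (a' z - b' z) * (a'' z - b'' z)).
  assert (HW : forall z, is_derive W z (Wd z)).
  { intro t. destruct (Ha t) as [Ha1 [Ha2 _]]. destruct (Hb t) as [Hb1 [Hb2 _]].
    pose proof (is_derive_pow _ 2 t _ (is_derive_minus a b t _ _ Ha1 Hb1)) as P1.
    pose proof (is_derive_pow _ 2 t _ (is_derive_minus a' b' t _ _ Ha2 Hb2)) as P2.
    pose proof (is_derive_plus _ _ t _ _ P1 P2) as P.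
    eapply deq; [exact P|]. unfold Wd. simpl. unfold minus, plus, opp; simpl. ring. }
  set (L := 1 + Rabs K).
  assert (HL : 0 < L) by (unfold L; pose proof (Rabs_pos K); lra).
  assert (HWp : forall t, 0 <= W t) by (intro t; unfold W; pose proof (pow2_ge_0 (a t - b t)); pose proof (pow2_ge_0 (a' t - b' t)); lra).
  assert (Hest : forall t, Wd t <= L * W t /\ - (L * W t) <= Wd t).
  { intro t. destruct (Ha t) as [_ [_ Ea]]. destruct (Hb t) as [_ [_ Eb]].
    pose proof (sin_lip (a t) (b t)) as Hs.
    set (u := a t - b t) in *. set (v := a' t - b' t).
    set (s := sin (a t) - sin (b t)) in *.
    assert (Hs2 : s * s <= u * u).
    { apply Rsqr_le_abs_1 in Hs. unfold Rsqr in Hs. exact Hs. }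
    assert (Hd : a'' t - b'' t = K * s) by (unfold s; rewrite Ea, Eb; ring).
    unfold Wd, W, L. fold u v. rewrite Hd. clearbody u v s.
    destruct (Rcase_abs K) as [Hk|Hk].
    - rewrite (Rabs_left K Hk). set (k := - K). assert (Kk : K = - k) by (unfold k; ring).
      clearbody k. subst K.
      assert (Hk0 : 0 <= k) by lra.
      assert (S1 : 0 <= (v + s) * (v + s)) by (apply Rle_0_sqr).
      assert (S2 : 0 <= k * ((v + s) * (v + s))) by (apply Rmult_le_pos; assumption).
      assert (S3 : k * (s * s) <= k * (u * u)) by (apply Rmult_le_compat_l; assumption).
      assert (S4 : 0 <= (u - v) * (u - v)) by (apply Rle_0_sqr). assert (S5 : 0 <= (u + v) * (u + v)) by (apply Rle_0_sqr).
      assert (S6 : 0 <= k * ((v - s) * (v - s))) by (apply Rmult_le_pos; [assumption|apply Rle_0_sqr]).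
      simpl. split; lra.
    - rewrite (Rabs_right K Hk). rename K into k. assert (Hk0 : 0 <= k) by lra.
      assert (S1 : 0 <= (v + s) * (v + s)) by (apply Rle_0_sqr).
      assert (S2 : 0 <= k * ((v + s) * (v + s))) by (apply Rmult_le_pos; assumption).
      assert (S3 : k * (s * s) <= k * (u * u)) by (apply Rmult_le_compat_l; assumption).
      assert (S4 : 0 <= (u - v) * (u - v)) by (apply Rle_0_sqr). assert (S5 : 0 <= (u + v) * (u + v)) by (apply Rle_0_sqr).
      assert (S6 : 0 <= k * ((v - s) * (v - s))) by (apply Rmult_le_pos; [assumption|apply Rle_0_sqr]).
      simpl. split; lra. }
  assert (HWz : W z = 0).
  { destruct (Rle_or_lt 0 z) as [Hz|Hz].
    - set (E := fun t => W t * exp (- L * t)).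
      assert (M := mvt_ub E 0 z 0 Hz).
      assert (E z - E 0 <= 0 * (z - 0)).
      { apply M. intros t _. exists (Wd t * exp (- L * t) + W t * (- L * exp (- L * t))).
        split.
        - assert (D : is_derive (fun t => exp (- L * t)) t (- L * exp (- L * t)))
            by (auto_derive; [auto|ring]).
          pose proof (is_derive_mult W _ t _ _ (HW t) D) as P.
          eapply deq; [apply P|]. intros; apply Rmult_comm. unfold mult, plus; simpl. ring.
        - pose proof (exp_pos (- L * t)). destruct (Hest t). nra. }
      unfold E in H. replace (W 0) with 0 in H by (unfold W; rewrite H0, H0'; ring).
      pose proof (exp_pos (- L * z)). pose proof (HWp z). nra.
    - set (E := fun t => W t * exp (L * t)).
      assert (M := mvt_lb E z 0 0 ltac:(lra)).
      assert (0 * (0 - z) <= E 0 - E z).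
      { apply M. intros t _. exists (Wd t * exp (L * t) + W t * (L * exp (L * t))).
        split.
        - assert (D : is_derive (fun t => exp (L * t)) t (L * exp (L * t)))
            by (auto_derive; [auto|ring]).
          pose proof (is_derive_mult W _ t _ _ (HW t) D) as P.
          eapply deq; [apply P|]. intros; apply Rmult_comm. unfold mult, plus; simpl. ring.
        - pose proof (exp_pos (L * t)). destruct (Hest t). nra. }
      unfold E in H. replace (W 0) with 0 in H by (unfold W; rewrite H0, H0'; ring).
      pose proof (exp_pos (L * z)). pose proof (HWp z). nra. }
  unfold W in HWz.
  pose proof (pow2_ge_0 (a z - b z)). pose proof (pow2_ge_0 (a' z - b' z)).
  assert (Q : (a z - b z) * (a z - b z) = 0) by (simpl in *; lra).
  apply Rmult_integral in Q. lra.
Qed.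

Lemma key_point (c : R) (f f' f'' : R -> R) : c ^ 2 <> 1 ->
  (forall z, is_derive f z (f' z) /\ is_derive f' z (f'' z) /\
    (c ^ 2 - 1) * f'' z + sin (f z) = 0) ->
  exists z0, f' z0 = 0 \/ sin (f z0) = 0.
Proof.
  intros Hc Hf.
  destruct (classic (exists z0, f' z0 = 0 \/ sin (f z0) = 0)) as [|N]; auto.
  exfalso.
  assert (N1 : forall z, f' z <> 0) by (intros z E; apply N; exists z; auto).
  assert (N2 : forall z, sin (f z) <> 0) by (intros z E; apply N; exists z; auto).
  assert (Cf : forall z, continuity_pt f z) by (intro z; destruct (Hf z) as [H _]; exact (der_cont _ _ _ H)).
  assert (Cf' : forall z, continuity_pt f' z) by (intro z; destruct (Hf z) as [_ [H _]]; exact (der_cont _ _ _ H)).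
  assert (Cs : forall z, continuity_pt (fun z => sin (f z)) z).
  { intro z. apply (continuity_pt_comp f sin). apply Cf. apply continuity_sin. }
  assert (Sf'' : (forall z, 0 < f'' z) \/ (forall z, f'' z < 0)).
  { destruct (const_sign _ Cs N2) as [Hs|Hs];
    destruct (Rlt_or_le 0 (c ^ 2 - 1)) as [Hcc|Hcc].
    - right. intro z. destruct (Hf z) as [_ [_ E]]. specialize (Hs z).
      destruct (Rlt_or_le (f'' z) 0); auto. nra.
    - left. intro z. destruct (Hf z) as [_ [_ E]]. specialize (Hs z).
      assert (c ^ 2 - 1 < 0) by lra.
      destruct (Rlt_or_le 0 (f'' z)); auto. nra.
    - left. intro z. destruct (Hf z) as [_ [_ E]]. specialize (Hs z).
      destruct (Rlt_or_le 0 (f'' z)); auto. nra.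
    - right. intro z. destruct (Hf z) as [_ [_ E]]. specialize (Hs z).
      assert (c ^ 2 - 1 < 0) by lra.
      destruct (Rlt_or_le (f'' z) 0); auto. nra. }
  assert (Sf' := const_sign _ Cf' N1).
  pose proof PI_RGT_0 as Hpi.
  set (n := up (f 0 / PI)).
  destruct (archimed (f 0 / PI)) as [A1 A2]. fold n in A1, A2.
  assert (E0 : f 0 / PI * PI = f 0) by (field; lra).
  assert (B1 : f 0 < IZR n * PI) by (rewrite <- E0; apply Rmult_lt_compat_r; lra).
  assert (B2 : IZR n * PI <= f 0 + PI).
  { assert (IZR n * PI - f 0 / PI * PI <= 1 * PI) by (rewrite <- Rmult_minus_distr_r; apply Rmult_le_compat_r; lra). lra. }
  assert (Up : forall z, f z < f 0 + PI).
  { intro z. destruct (Rlt_or_le (f z) (f 0 + PI)) as [|H]; auto. exfalso.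
    destruct (ivt_hit f 0 z (IZR n * PI) Cf ltac:(lra) ltac:(lra)) as [t Ht].
    apply (N2 t). apply sin_eq_0_1. exists n; auto. }
  assert (Lo : forall z, f 0 - PI < f z).
  { intro z. destruct (Rlt_or_le (f 0 - PI) (f z)) as [|H]; auto. exfalso.
    destruct (ivt_hit f z 0 (IZR (n - 1) * PI) Cf) as [t Ht].
    - rewrite minus_IZR. lra.
    - rewrite minus_IZR. lra.
    - apply (N2 t). apply sin_eq_0_1. exists (n - 1)%Z; auto. }
  set (d := f' 0).
  assert (dF : forall t, is_derive f t (f' t)) by (intro t; apply (Hf t)).
  assert (dF' : forall t, is_derive f' t (f'' t)) by (intro t; apply (Hf t)).
  destruct Sf' as [P|P]; destruct Sf'' as [Q|Q].
  - assert (Hd : 0 < d) by apply P.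
    set (y := PI / d).
    assert (Hy : 0 <= y) by (unfold y; apply Rlt_le, Rdiv_lt_0_compat; lra).
    assert (G : forall t, 0 <= t <= y -> d <= f' t).
    { intros t Ht. pose proof (mvt_lb f' 0 t 0 ltac:(lra)) as M.
      assert (0 * (t - 0) <= f' t - f' 0).
      { apply M. intros s _. exists (f'' s). split; auto. apply Rlt_le, Q. }
      unfold d; lra. }
    pose proof (mvt_lb f 0 y d Hy) as M.
    assert (d * (y - 0) <= f y - f 0) by (apply M; intros t Ht; exists (f' t); auto).
    assert (d * y = PI) by (unfold y; field; lra).
    specialize (Up y). lra.
  - assert (Hd : 0 < d) by apply P.
    set (y := - (PI / d)).
    assert (Hy : y <= 0) by (unfold y; assert (0 < PI / d) by (apply Rdiv_lt_0_compat; lra); lra).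
    assert (G : forall t, y <= t <= 0 -> d <= f' t).
    { intros t Ht. pose proof (mvt_ub f' t 0 0 ltac:(lra)) as M.
      assert (f' 0 - f' t <= 0 * (0 - t)).
      { apply M. intros s _. exists (f'' s). split; auto. apply Rlt_le, Q. }
      unfold d; lra. }
    pose proof (mvt_lb f y 0 d Hy) as M.
    assert (d * (0 - y) <= f 0 - f y) by (apply M; intros t Ht; exists (f' t); auto).
    assert (d * y = - PI) by (unfold y; field; lra).
    specialize (Lo y). lra.
  - assert (Hd : d < 0) by apply P.
    set (y := PI / d).
    assert (Hy : y <= 0).
    { unfold y. unfold Rdiv. assert (/ d < 0) by (apply Rinv_lt_0_compat; lra). nra. }
    assert (G : forall t, y <= t <= 0 -> f' t <= d).
    { intros t Ht. pose proof (mvt_lb f' t 0 0 ltac:(lra)) as M.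
      assert (0 * (0 - t) <= f' 0 - f' t).
      { apply M. intros s _. exists (f'' s). split; auto. apply Rlt_le, Q. }
      unfold d; lra. }
    pose proof (mvt_ub f y 0 d Hy) as M.
    assert (f 0 - f y <= d * (0 - y)) by (apply M; intros t Ht; exists (f' t); auto).
    assert (d * y = PI) by (unfold y; field; lra).
    specialize (Up y). lra.
  - assert (Hd : d < 0) by apply P.
    set (y := - (PI / d)).
    assert (Hy : 0 <= y).
    { unfold y. unfold Rdiv. assert (/ d < 0) by (apply Rinv_lt_0_compat; lra). nra. }
    assert (G : forall t, 0 <= t <= y -> f' t <= d).
    { intros t Ht. pose proof (mvt_ub f' 0 t 0 ltac:(lra)) as M.
      assert (f' t - f' 0 <= 0 * (t - 0)).
      { apply M. intros s _. exists (f'' s). split; auto. apply Rlt_le, Q. }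
      unfold d; lra. }
    pose proof (mvt_ub f 0 y d Hy) as M.
    assert (f y - f 0 <= d * (y - 0)) by (apply M; intros t Ht; exists (f' t); auto).
    assert (d * y = - PI) by (unfold y; field; lra).
    specialize (Lo y). lra.
Qed.

Lemma der_shift (h : R -> R) z0 z d : is_derive h (z0 + z) d -> is_derive (fun z => h (z0 + z)) z d.
Proof.
  intro H. assert (G : is_derive (fun z => z0 + z) z 1) by (auto_derive; auto; ring).
  pose proof (is_derive_comp h (fun z => z0 + z) z d 1 H G) as P.
  eapply deq; [exact P|]. simpl. unfold scal; simpl. unfold mult; simpl. ring.
Qed.

Lemma der_refl (h : R -> R) z0 z d : is_derive h (z0 - z) d -> is_derive (fun z => h (z0 - z)) z (- d).
Proof.
  intro H. assert (G : is_derive (fun z => z0 - z) z (-1)) by (auto_derive; auto; ring).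
  pose proof (is_derive_comp h (fun z => z0 - z) z d (-1) H G) as P.
  eapply deq; [exact P|]. simpl. unfold scal; simpl. unfold mult; simpl. ring.
Qed.

Lemma reflect (c : R) (f : R -> R) : traveling_wave c f ->
  exists z0, forall z, cos (f (z0 + z)) = cos (f (z0 - z)).
Proof.
  intros [Hc [f' [f'' Hf]]].
  destruct (key_point c f f' f'' Hc Hf) as [z0 Hz0].
  assert (Hc1 : c ^ 2 - 1 <> 0) by lra.
  set (K := - / (c ^ 2 - 1)).
  assert (EK : forall z, f'' z = K * sin (f z)).
  { intro z. destruct (Hf z) as [_ [_ E]]. unfold K. field_simplify_eq; auto. lra. }
  assert (Ha : forall z, is_derive (fun z => f (z0 + z)) z (f' (z0 + z)) /\
     is_derive (fun z => f' (z0 + z)) z (f'' (z0 + z)) /\ f'' (z0 + z) = K * sin (f (z0 + z))).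
  { intro z. destruct (Hf (z0 + z)) as [D1 [D2 _]].
    split; [apply der_shift; auto|split; [apply der_shift; auto| apply EK]]. }
  exists z0. intro z.
  destruct Hz0 as [H0|H0].
  - assert (Hb : forall z, is_derive (fun z => f (z0 - z)) z (- f' (z0 - z)) /\
       is_derive (fun z => - f' (z0 - z)) z (f'' (z0 - z)) /\ f'' (z0 - z) = K * sin (f (z0 - z))).
    { intro t. destruct (Hf (z0 - t)) as [D1 [D2 _]].
      split; [apply der_refl; auto|split; [|apply EK]].
      pose proof (is_derive_opp _ _ _ (der_refl f' z0 t _ D2)) as P.
      eapply deq; [exact P|]. unfold opp; simpl; ring. }
    rewrite (ode_uniq K _ _ _ _ _ _ Ha Hb); auto.
    + rewrite Rplus_0_r, Rminus_0_r; auto.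
    + rewrite Rplus_0_r, Rminus_0_r, H0; ring.
  - set (F0 := f z0).
    assert (S2 : sin (2 * F0) = 0) by (rewrite sin_2a; unfold F0; rewrite H0; ring).
    assert (C2 : cos (2 * F0) = 1) by (rewrite cos_2a_sin; unfold F0; rewrite H0; ring).
    assert (Hb : forall z, is_derive (fun z => 2 * F0 - f (z0 - z)) z (f' (z0 - z)) /\
       is_derive (fun z => f' (z0 - z)) z (- f'' (z0 - z)) /\
       - f'' (z0 - z) = K * sin (2 * F0 - f (z0 - z))).
    { intro t. destruct (Hf (z0 - t)) as [D1 [D2 _]].
      split; [|split; [apply der_refl; auto|]].
      - pose proof (is_derive_minus _ _ _ _ _ (is_derive_const (2 * F0) t) (der_refl f z0 t _ D1)) as P.
        eapply deq; [exact P|]. unfold minus, plus, opp, zero; simpl; ring.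
      - rewrite sin_minus, S2, C2, EK. ring. }
    rewrite (ode_uniq K _ _ _ _ _ _ Ha Hb).
    + rewrite cos_minus, S2, C2. ring.
    + rewrite Rplus_0_r, Rminus_0_r. unfold F0; ring.
    + rewrite Rplus_0_r, Rminus_0_r; auto.
Qed.

Lemma Cconj_lin : is_linear (K := R_AbsRing) (U := C_R_NormedModule) (V := C_R_NormedModule) Cconj.
Proof.
  apply (is_linear_ext (fun x : C_R_NormedModule => (fst x, opp (snd x)))).
  - intros [a b]; reflexivity.
  - apply (is_linear_prod (K := R_AbsRing) (T := C_R_NormedModule) (U := R_NormedModule) (V := R_NormedModule)).
    + apply is_linear_fst.
    + apply (is_linear_comp (fun t : C_R_NormedModule => snd t) opp).
      * apply is_linear_snd.
      * apply is_linear_opp.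
Qed.

Lemma der_conj (p : R -> C) z d : is_derive p z d -> is_derive (fun z => Cconj (p z)) z (Cconj d).
Proof.
  intro H. unfold is_derive in *.
  eapply filterdiff_ext_lin.
  - apply (filterdiff_comp' p Cconj z _ Cconj H). apply filterdiff_linear. apply Cconj_lin.
  - intro y. destruct d as [a b]. unfold Cconj, scal; simpl. unfold prod_scal, scal; simpl.
    unfold mult; simpl. f_equal; ring.
Qed.

Lemma conj_RtoC r : Cconj (RtoC r) = RtoC r.
Proof. unfold Cconj, RtoC; simpl. f_equal; ring. Qed.

Lemma conj_closed c f lam : sigmaP c f lam -> sigmaP c f (Cconj lam).
Proof.
  intros [p [p' [p'' [Hd [[M HM] [z0 Hz0]]]]]].
  exists (fun z => Cconj (p z)), (fun z => Cconj (p' z)), (fun z => Cconj (p'' z)).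
  split; [|split].
  - intro z. destruct (Hd z) as [D1 [D2 E]].
    split; [apply der_conj; auto|split; [apply der_conj; auto|]].
    apply (f_equal Cconj) in E.
    rewrite Cplus_conj, Cminus_conj, !Cmult_conj, Cplus_conj, Cmult_conj, !conj_RtoC in E.
    rewrite E. reflexivity.
  - exists M. intro z. rewrite Cmod_conj. auto.
  - exists z0. intro E. apply Hz0. rewrite <- (Cconj_conj (p z0)), E.
    exact (conj_RtoC 0).
Qed.

Lemma der_reflC (p : R -> C) z1 z d : is_derive p (z1 - z) d ->
  is_derive (fun z => p (z1 - z)) z (Copp d).
Proof.
  intro H. assert (G : is_derive (fun z => z1 - z) z (-1)) by (auto_derive; auto; ring).
  pose proof (is_derive_comp p (fun z => z1 - z) z d (-1) H G) as P.
  replace (Copp d) with (scal (-1) d); auto.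
  destruct d as [a b]. unfold scal; simpl. unfold prod_scal, scal; simpl. unfold mult; simpl.
  unfold Copp; simpl. f_equal; ring.
Qed.

Lemma neg_closed c f lam : traveling_wave c f -> sigmaP c f lam -> sigmaP c f (Copp lam).
Proof.
  intros Ht [p [p' [p'' [Hd [[M HM] [w0 Hw0]]]]]].
  destruct (reflect c f Ht) as [z0 Hz0].
  set (z1 := z0 + z0).
  assert (Hcos : forall z, cos (f (z1 - z)) = cos (f z)).
  { intro z. replace (z1 - z) with (z0 + (z0 - z)) by (unfold z1; ring).
    rewrite Hz0. f_equal. f_equal. ring. }
  exists (fun z => p (z1 - z)), (fun z => Copp (p' (z1 - z))), (fun z => p'' (z1 - z)).
  split; [|split].
  - intro z. destruct (Hd (z1 - z)) as [D1 [D2 E]].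
    split; [apply der_reflC; auto|split].
    + pose proof (der_reflC p' z1 z _ D2) as P.
      pose proof (is_derive_opp _ _ _ P) as Q.
      replace (p'' (z1 - z)) with (opp (Copp (p'' (z1 - z)))).
      * exact Q.
      * change (Copp (Copp (p'' (z1 - z))) = p'' (z1 - z)). ring.
    + rewrite Hcos in E. rewrite <- E. ring.
  - exists M. intro z. apply HM.
  - exists (z1 - w0). replace (z1 - (z1 - w0)) with w0 by ring. exact Hw0.
Qed.

Theorem proposition1p7 (c : R) (f : R -> R) :
  periodic_traveling_wave c f ->
  same_set (sigmaP c f) (conj_set (sigmaP c f)) /\
  same_set (sigmaP c f) (neg_set (sigmaP c f)) /\
  same_set (sigmaP c f) (neg_set (conj_set (sigmaP c f))).
Proof.
  intro H.
  assert (Ht : traveling_wave c f) by (destruct H as [[T _]|[T _]]; exact T).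
  assert (CC : forall l : C, Cconj (Cconj l) = l) by apply Cconj_conj.
  assert (OO : forall l : C, Copp (Copp l) = l) by (intro; ring).
  split; [|split]; intro mu; split.
  - intro Hm. exists (Cconj mu). split; [apply conj_closed; auto| rewrite CC; auto].
  - intros [l [Hl E]]. subst. apply conj_closed; auto.
  - intro Hm. exists (Copp mu). split; [apply neg_closed; auto| rewrite OO; auto].
  - intros [l [Hl E]]. subst. apply neg_closed; auto.
  - intro Hm. exists (Copp mu). split.
    + exists (Cconj (Copp mu)). split; [apply conj_closed, neg_closed; auto| rewrite CC; auto].
    + rewrite OO; auto.
  - intros [l [[k [Hk E1]] E2]]. subst. apply neg_closed; auto. apply conj_closed; auto.
Qed.
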